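(* Let $n$ and $k$ be positive integers, let $E_{k}:=\{(i,j)\in\mathbb{Z}^{2}:|j-i|\geq k+1\}$, and let $h:\{0,1,\ldots,n-1\}\to\mathbb{R}$ be a nonincreasing function. Let $u:\{1,\ldots,n\}\to\mathbb{Z}$ be any function and let $Mu$ be its nondecreasing rearrangement. Then \[ \mathcal{H}(h,E_{k},u)\geq\mathcal{H}(h,E_{k},Mu). \]
   Context: For a function $u:\{1,\ldots,n\}\to\mathbb{Z}$, a symmetric set $E\subseteq\mathbb{Z}^{2}$ (i.e. $(i,j)\in E$ iff $(j,i)\in E$) and $h:\{0,\ldots,n-1\}\to\mathbb{R}$, define $J(E,u):=\{(x,y)\in\{1,\ldots,n\}^{2}:x\leq y,\ (u(x),u(y))\in E\}$ (pairs with $x=y$ are allowed) and $\mathcal{H}(h,E,u):=\sum_{(x,y)\in J(E,u)}h(y-x)$. The nondecreasing rearrangement of $u$ is $Mu:\{1,\ldots,n\}\to\mathbb{Z}$, $Mu(x):=\min\{j\in\mathbb{Z}:|\{y\in\{1,\ldots,n\}:u(y)\leq j\}|\geq x\}$, where $|A|$ is the cardinality of $A$. *)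

(* Defs.v *)
From mathcomp Require Import all_boot all_order all_algebra.
From mathcomp Require Import reals.
Set Implicit Arguments. Unset Strict Implicit. Unset Printing Implicit Defensive.
Import Order.TTheory GRing.Theory Num.Theory.
Local Open Scope ring_scope.

(* Functions on {1,...,n} are represented as total functions on nat;
   only their values on 1..n matter. *)

Definition Ek (k : nat) (i j : int) : bool := ((k.+1)%:Z <= `|j - i|).

Definition symmetric_set (E : int -> int -> bool) : Prop :=
  forall i j, E i j = E j i.

Definition J (n : nat) (E : int -> int -> bool) (u : nat -> int)
  : seq (nat * nat) :=
  [seq p <- [seq (x, y) | x <- iota 1 n, y <- iota 1 n]
     | (p.1 <= p.2)%N && E (u p.1) (u p.2)].

Definition Hfun (R : realType) (n : nat) (h : nat -> R)
  (E : int -> int -> bool) (u : nat -> int) : R :=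
  \sum_(p <- J n E u) h (p.2 - p.1)%N.

Definition cnt_le (n : nat) (u : nat -> int) (j : int) : nat :=
  count (fun y => u y <= j) (iota 1 n).

(* Mu(x) = min {j in Z : |{y : u y <= j}| >= x}; v is the nondecreasing
   rearrangement of u when v x is that minimum for every x in {1..n}. *)
Definition is_min_int (P : int -> Prop) (m : int) : Prop :=
  P m /\ forall j, P j -> m <= j.

Definition is_Mu (n : nat) (u v : nat -> int) : Prop :=
  forall x : nat, (1 <= x <= n)%N ->
    is_min_int (fun j => (x <= cnt_le n u j)%N) (v x).

(* Main.v *)
Require Import Defs.
From mathcomp Require Import all_boot all_order all_algebra.
From mathcomp Require Import reals.
From mathcomp Require Import zify ring lra.
Import Order.TTheory GRing.Theory Num.Theory.


Definition cl (k : nat) (f : nat -> int) (X Y : nat) : bool := ~~ Ek k (f X) (f Y).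
Definition Ct k t n f : nat :=
  \sum_(X <- iota 1 n) \sum_(Y <- iota 1 n) ((X < Y) * (Y - X <= t) * cl k f X Y).
Definition phi p x := if x < p then x else x.+1.

Lemma sum_pred1 (F : nat -> nat) a N : 1 <= a <= N ->
  \sum_(X <- iota 1 N) (X == a) * F X = F a.
Proof.
move=> Ha.
transitivity (\sum_(X <- iota 1 N | X == a) F X).
  by rewrite [RHS]big_mkcond; apply: eq_bigr => X _; case: eqP; rewrite ?mul1n ?mul0n.
rewrite -big_filter.
have -> : [seq X <- iota 1 N | X == a] = [:: a].
  apply: filter_pred1_uniq; first exact: iota_uniq.
  rewrite mem_iota; lia.
by rewrite big_seq1.
Qed.

Lemma sum_filter (P : pred nat) (F : nat -> nat) s :
  \sum_(X <- [seq X <- s | P X]) F X = \sum_(X <- s) P X * F X.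
Proof.
by rewrite big_filter big_mkcond; apply: eq_bigr => X _; case: (P X); rewrite ?mul1n ?mul0n.
Qed.

Lemma map_phi p m : 1 <= p <= m.+1 ->
  map (phi p) (iota 1 m) = [seq X <- iota 1 m.+1 | X != p].
Proof.
move=> Hp.
have E1 : m = p.-1 + (m.+1 - p) by lia.
have E2 : m.+1 = p.-1 + (m.+1 - p).+1 by lia.
rewrite {1}E1 {2}E2 !iotaD map_cat filter_cat.
have -> : 1 + p.-1 = p by lia.
congr (_ ++ _).
  have -> : map (phi p) (iota 1 p.-1) = map id (iota 1 p.-1).
    by apply/eq_in_map => x; rewrite mem_iota /phi => Hx; have -> : x < p by lia.
  rewrite map_id.
  apply/esym/all_filterP/allP => x; rewrite mem_iota => Hx; apply/eqP; lia.
rewrite /= eqxx /=.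
have -> : map (phi p) (iota p (m.+1 - p)) = map (addn 1) (iota p (m.+1 - p)).
  by apply/eq_in_map => x; rewrite mem_iota /phi => Hx; have -> : (x < p) = false by lia.
rewrite -iotaDl add1n.
apply/esym/all_filterP/allP => x; rewrite mem_iota => Hx; apply/eqP; lia.
Qed.

Lemma reindex_phi p m (F : nat -> nat) : 1 <= p <= m.+1 ->
  \sum_(x <- iota 1 m) F (phi p x) = \sum_(X <- iota 1 m.+1) (X != p) * F X.
Proof.
move=> Hp; by rewrite -(big_map (phi p) xpredT F) map_phi // sum_filter.
Qed.

Lemma iota1S n : iota 1 n.+1 = iota 1 n ++ [:: n.+1].
Proof. by rewrite -(addn1 n) iotaD /= add1n addn1. Qed.


Lemma pointwise_id (X Y p t : nat) (b : bool) :
  (X < Y) * (Y - X <= t) * b + (X < p) * (p < Y) * (Y - X == t.+1) * b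
 = (X != p) * ((Y != p) * ((X < Y) * (Y - X - ((X < p) && (p < Y)) <= t) * b))
   + (Y == p) * ((X < Y) * (Y - X <= t) * b) + (X == p) * ((X < Y) * (Y - X <= t) * b).
Proof. case: b; rewrite ?muln0 ?muln1 //; lia. Qed.

Lemma decomp k f t m p : 1 <= p <= m.+1 ->
  Ct k t m.+1 f +
  \sum_(X <- iota 1 m.+1) \sum_(Y <- iota 1 m.+1)
     ((X < p) * (p < Y) * (Y - X == t.+1) * cl k f X Y)
  = Ct k t m (fun x => f (phi p x)) +
    \sum_(X <- iota 1 m.+1) ((X < p) * (p - X <= t) * cl k f X p) +
    \sum_(Y <- iota 1 m.+1) ((p < Y) * (Y - p <= t) * cl k f p Y).
Proof.
move=> Hp; rewrite /Ct.
set T' := fun X Y => (X < Y) * (Y - X - ((X < p) && (p < Y)) <= t) * cl k f X Y.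
have -> : \sum_(x <- iota 1 m) \sum_(y <- iota 1 m)
    ((x < y) * (y - x <= t) * cl k (fun x0 : nat => f (phi p x0)) x y)
   = \sum_(X <- iota 1 m.+1) (X != p) * \sum_(Y <- iota 1 m.+1) ((Y != p) * T' X Y).
  transitivity (\sum_(x <- iota 1 m) \sum_(y <- iota 1 m) T' (phi p x) (phi p y)).
    apply: eq_bigr => x _; apply: eq_bigr => y _.
    rewrite /T' /cl; congr (_ * _).
    rewrite /phi; case: (ltnP x p) => H1; case: (ltnP y p) => H2; lia.
  rewrite -(reindex_phi p m (fun X : nat => \sum_(Y <- iota 1 m.+1) (Y != p) * T' X Y)) //.
  by apply: eq_bigr => x _; rewrite reindex_phi.
have -> : \sum_(X <- iota 1 m.+1) ((X < p) * (p - X <= t) * cl k f X p)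
  = \sum_(X <- iota 1 m.+1) \sum_(Y <- iota 1 m.+1)
      ((Y == p) * ((X < Y) * (Y - X <= t) * cl k f X Y)).
  apply: eq_bigr => X _.
  by rewrite (sum_pred1 (fun Y : nat => (X < Y) * (Y - X <= t) * cl k f X Y)).
have -> : \sum_(Y <- iota 1 m.+1) ((p < Y) * (Y - p <= t) * cl k f p Y)
  = \sum_(X <- iota 1 m.+1) \sum_(Y <- iota 1 m.+1)
      ((X == p) * ((X < Y) * (Y - X <= t) * cl k f X Y)).
  transitivity (\sum_(X <- iota 1 m.+1) (X == p) * \sum_(Y <- iota 1 m.+1) ((X < Y) * (Y - X <= t) * cl k f X Y)).
    by rewrite (sum_pred1 (fun X : nat => \sum_(Y <- iota 1 m.+1) ((X < Y) * (Y - X <= t) * cl k f X Y))).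
  by apply: eq_bigr => X _; rewrite big_distrr.
rewrite -!big_split; apply: eq_bigr => X _.
rewrite big_distrr -!big_split; apply: eq_bigr => Y _ /=.
by rewrite pointwise_id.
Qed.


Lemma count_sum (a : pred nat) s : count a s = \sum_(x <- s) a x.
Proof. by elim: s => [|x s IH]; rewrite ?big_nil ?big_cons //= IH. Qed.

Lemma cnt_mono n u (j j' : int) : (j <= j')%R -> cnt_le n u j <= cnt_le n u j'.
Proof.
move=> H; apply: sub_count => x /= Hx; exact: le_trans Hx H.
Qed.

Lemma cnt_size n u j : cnt_le n u j <= n.
Proof. by rewrite /cnt_le (leq_trans (count_size _ _)) // size_iota. Qed.

Lemma Mu_le n u g x j : is_Mu n u g -> 1 <= x <= n ->
  (g x <= j)%R = (x <= cnt_le n u j).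
Proof.
move=> HM Hx; have [/= H1 H2] := HM x Hx.
apply/idP/idP => H.
  exact: (leq_trans H1 (cnt_mono _ _ _ _ H)).
exact: H2.
Qed.

Lemma count_le_iota c n : count (fun x => x <= c) (iota 1 n) = minn n c.
Proof.
elim: n => [|n IH]; first by rewrite /= min0n.
rewrite iota1S.
rewrite count_cat IH /=; lia.
Qed.

Lemma sum_le_iota c n : \sum_(x <- iota 1 n) (x <= c) = minn n c.
Proof. by rewrite -count_le_iota count_sum. Qed.

Lemma Mu_cnt n u g j : is_Mu n u g -> cnt_le n g j = cnt_le n u j.
Proof.
move=> HM; rewrite {1}/cnt_le.
rewrite (eq_in_count (a2 := fun x => x <= cnt_le n u j)).
  by rewrite count_le_iota; apply/minn_idPr; exact: cnt_size.
by move=> x; rewrite mem_iota => Hx /=; apply: Mu_le => //; lia.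
Qed.

Lemma Ek_sym k a b : Ek k a b = Ek k b a.
Proof. by rewrite /Ek distrC. Qed.

Lemma Ek_le k (a M : int) : (a <= M)%R -> Ek k a M = (a <= M - (k.+1)%:Z)%R.
Proof.
move=> H; rewrite /Ek ger0_norm ?subr_ge0 //; lia.
Qed.

Lemma cl_trans k (a b M : int) : (a <= M)%R -> (b <= M)%R ->
  ~~ Ek k a M -> ~~ Ek k b M -> ~~ Ek k a b.
Proof.
move=> Ha Hb; rewrite (Ek_le k _ _ Ha) (Ek_le k _ _ Hb) /Ek.
case: (lerP a b) => Hab; lia.
Qed.


Lemma sum_pred1_cond a N (b : bool) (F : nat -> nat) : (b -> 1 <= a <= N) ->
  \sum_(X <- iota 1 N) (X == a) * (b * F X) = b * F a.
Proof.
case: b => H.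
  by rewrite (sum_pred1 (fun X => 1 * F X)) //; exact: H.
by rewrite big1 // => X _; rewrite mul0n muln0.
Qed.

Lemma coef_eq (c1 c2 c3 y : nat) : c1 = c2 + c3 -> c1 * y = c2 * y + c3 * y.
Proof. by move=> ->; rewrite mulnDl. Qed.

Lemma winL N p t (F : nat -> nat) : p <= N.+1 ->
  \sum_(X <- iota 1 N) (X < p) * (p - X <= t) * F X
  = \sum_(d <- iota 1 t) (d < p) * F (p - d).
Proof.
move=> Hp; elim: t => [|t IH].
  rewrite big_nil big1_seq // => X; rewrite mem_iota => /andP [_ HX].
  by have -> : (X < p) * (p - X <= 0) = 0 by lia.
rewrite iota1S big_cat big_seq1 /= -IH.
rewrite (eq_big_seq (fun X => (X < p) * (p - X <= t) * F X + (X == p - t.+1) * ((t.+1 < p) * F X))).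
  rewrite big_split /= sum_pred1_cond //; lia.
move=> X; rewrite mem_iota => HX.
rewrite mulnA; apply: coef_eq; lia.
Qed.

Lemma winR N p t (F : nat -> nat) : 1 <= p ->
  \sum_(Y <- iota 1 N) (p < Y) * (Y - p <= t) * F Y
  = \sum_(d <- iota 1 t) (p + d <= N) * F (p + d).
Proof.
move=> Hp; elim: t => [|t IH].
  rewrite big_nil big1_seq // => X; rewrite mem_iota => /andP [_ HX].
  by have -> : (p < X) * (X - p <= 0) = 0 by lia.
rewrite iota1S big_cat big_seq1 /= -IH.
rewrite (eq_big_seq (fun Y => (p < Y) * (Y - p <= t) * F Y + (Y == p + t.+1) * ((p + t.+1 <= N) * F Y))).
  rewrite big_split /= sum_pred1_cond //; lia.
move=> Y; rewrite mem_iota => HY.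
rewrite mulnA; apply: coef_eq; lia.
Qed.

Lemma sum_rev t (F : nat -> nat) :
  \sum_(d <- iota 1 t) F d = \sum_(d <- iota 1 t) F (t.+1 - d).
Proof.
have E : iota 1 t = index_iota 1 t.+1 by rewrite /index_iota subSS subn0.
rewrite E big_nat_rev; apply: eq_big_nat => d Hd; congr F; lia.
Qed.

Lemma max_exists (f : nat -> int) m : exists p, 1 <= p <= m.+1 /\
  forall x, 1 <= x <= m.+1 -> (f x <= f p)%R.
Proof.
elim: m => [|m [p [Hp Hmax]]].
  by exists 1; split => // x Hx; have -> : x = 1 by lia.
case: (lerP (f p) (f m.+2)) => H.
  exists m.+2; split; first lia.
  move=> x Hx.
  case: (ltnP x m.+2) => Hx2; last by (have -> : x = m.+2 by lia); exact: lexx.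
  apply: le_trans H; apply: Hmax; lia.
exists p; split; first lia.
move=> x Hx; case: (ltnP x m.+2) => Hx2; first by apply: Hmax; lia.
have -> : x = m.+2 by lia.
exact: ltW.
Qed.

Lemma cnt_split m f p j : 1 <= p <= m.+1 ->
  cnt_le m.+1 f j = cnt_le m (fun x => f (phi p x)) j + (f p <= j)%R.
Proof.
move=> Hp; rewrite /cnt_le !count_sum /=.
rewrite (reindex_phi p m (fun X => nat_of_bool (f X <= j)%R)) //.
rewrite -(sum_pred1 (fun X => nat_of_bool (f X <= j)%R) _ _ Hp) -big_split /=.
apply: eq_bigr => X _; case: eqP => _ /=; lia.
Qed.

Lemma cnt_all m f p j : 1 <= p <= m.+1 ->
  (forall x, 1 <= x <= m.+1 -> (f x <= f p)%R) -> (f p <= j)%R ->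
  cnt_le m (fun x => f (phi p x)) j = m.
Proof.
move=> Hp Hmax Hj; rewrite /cnt_le.
rewrite (eq_in_count (a2 := predT)) ?count_predT ?size_iota //.
move=> x; rewrite mem_iota => Hx /=.
apply: le_trans Hj; apply: Hmax; rewrite /phi; case: ifP => _; lia.
Qed.

Lemma Mu_restrict m f g p : is_Mu m.+1 f g -> 1 <= p <= m.+1 ->
  (forall x, 1 <= x <= m.+1 -> (f x <= f p)%R) ->
  is_Mu m (fun x => f (phi p x)) g /\ g m.+1 = f p.
Proof.
move=> HM Hp Hmax.
have Eq : forall x j, 1 <= x <= m ->
    (x <= cnt_le m (fun x => f (phi p x)) j) = (x <= cnt_le m.+1 f j).
  move=> x j Hx; rewrite (cnt_split _ _ _ _ Hp).
  case: (boolP (f p <= j)%R) => Hj /=.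
    rewrite (cnt_all _ _ _ _ Hp Hmax Hj); lia.
  by rewrite addn0.
split.
  move=> x Hx; have [H1 H2] := HM x (ltac:(lia)).
  split; first by rewrite /= Eq.
  by move=> j Hj; apply: H2; rewrite /= -Eq.
have [/= H1 H2] := HM m.+1 (ltac:(lia)).
apply/le_anti/andP; split.
  apply: H2; rewrite (cnt_split _ _ _ _ Hp) (cnt_all _ _ _ _ Hp Hmax) // lexx; lia.
case: (boolP (f p <= g m.+1)%R) => // H.
move: H1; rewrite (cnt_split _ _ _ _ Hp) (negbTE H) addn0.
by have := cnt_size m (fun x => f (phi p x)) (g m.+1); lia.
Qed.


Lemma Ct_ext k t n f1 f2 : (forall x, 1 <= x <= n -> f1 x = f2 x) ->
  Ct k t n f1 = Ct k t n f2.
Proof.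
move=> E; apply: eq_big_seq => X; rewrite mem_iota => HX.
apply: eq_big_seq => Y; rewrite mem_iota => HY.
rewrite /cl !E //; lia.
Qed.

Lemma sum_negb (b : nat -> bool) s :
  \sum_(x <- s) ~~ b x = size s - \sum_(x <- s) b x.
Proof.
have H : \sum_(x <- s) ~~ b x + \sum_(x <- s) b x = size s.
  rewrite -big_split -sum1_size; apply: eq_bigr => x _; by case: (b x).
lia.
Qed.

Lemma sum_negb' (b : nat -> bool) n :
  \sum_(x <- iota 1 n) ~~ b x = n - \sum_(x <- iota 1 n) b x.
Proof. by rewrite sum_negb size_iota. Qed.

Section Step.
Variables (k t m : nat) (f g : nat -> int) (p : nat).
Hypothesis HM : is_Mu m.+1 f g.
Hypothesis Hp : 1 <= p <= m.+1.
Hypothesis Hmax : forall x, 1 <= x <= m.+1 -> (f x <= f p)%R.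

Let f' := fun x => f (phi p x).
Let M := f p.
Let K := m - cnt_le m f' (M - (k.+1)%:Z)%R.
Let Lf := \sum_(X <- iota 1 m.+1) ((X < p) * (p - X <= t) * cl k f X p).
Let Rf := \sum_(Y <- iota 1 m.+1) ((p < Y) * (Y - p <= t) * cl k f p Y).
Let Gf := \sum_(X <- iota 1 m.+1) \sum_(Y <- iota 1 m.+1)
     ((X < p) * (p < Y) * (Y - X == t.+1) * cl k f X Y).

Lemma K_eq : \sum_(X <- iota 1 m.+1) (X != p) * cl k f X p = K.
Proof.
rewrite -(reindex_phi p m (fun X => nat_of_bool (cl k f X p))) //.
rewrite /K /cnt_le count_sum -sum_negb'.
apply: eq_big_seq => x; rewrite mem_iota => Hx.
rewrite /cl /f' /M Ek_le //; apply: Hmax; rewrite /phi; case: ifP => _; lia.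
Qed.

Lemma LR_le_K : Lf + Rf <= K.
Proof.
rewrite -K_eq /Lf /Rf -big_split /=; apply: leq_sum => X _.
rewrite /cl Ek_sym; case: (~~ Ek k _ _); lia.
Qed.

Lemma LR_eq_K : m.+1 <= t -> Lf + Rf = K.
Proof.
move=> Ht; rewrite -K_eq /Lf /Rf -big_split; apply: eq_big_seq => X.
rewrite mem_iota => HX /=.
rewrite /cl Ek_sym; case: (~~ Ek k _ _); lia.
Qed.

Lemma G0 : m.+1 <= t -> Gf = 0.
Proof.
move=> Ht; rewrite /Gf big1_seq // => X; rewrite mem_iota => /andP [_ HX].
rewrite big1_seq // => Y; rewrite mem_iota => /andP [_ HY].
have -> : (Y - X == t.+1) = false by lia.
by rewrite muln0 mul0n.
Qed.

Lemma LR_le_tG : Lf + Rf <= t + Gf.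
Proof.
have HG : \sum_(X <- iota 1 m.+1) (X < p) * (p - X <= t) *
            ((X + t.+1 <= m.+1) * cl k f X (X + t.+1)) <= Gf.
  rewrite /Gf; apply: leq_sum => X _.
  have -> : (X < p) * (p - X <= t) * ((X + t.+1 <= m.+1) * cl k f X (X + t.+1))
     = (X + t.+1 <= m.+1) * ((X < p) * (p - X <= t) * cl k f X (X + t.+1)) by lia.
  rewrite -(sum_pred1_cond (X + t.+1) m.+1 (X + t.+1 <= m.+1)
             (fun Y => (X < p) * (p - X <= t) * cl k f X Y)); last by lia.
  apply: leq_sum => Y _.
  case: (cl k f X Y); lia.
apply: leq_trans _ (leq_add (leqnn t) HG).
rewrite /Lf /Rf winL; last lia.
rewrite winR; last lia.
rewrite winL; last lia.
rewrite (sum_rev t (fun d => (p + d <= m.+1) * cl k f p (p + d))) /=.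
set A := fun d => (d < p) * cl k f (p - d) p.
set B := fun d => (p + (t.+1 - d) <= m.+1) * cl k f p (p + (t.+1 - d)).
set C := fun d => (d < p) * ((p - d + t.+1 <= m.+1) * cl k f (p - d) (p - d + t.+1)).
suff H : \sum_(d <- iota 1 t) (A d + B d) <= \sum_(d <- iota 1 t) (1 + C d).
  by move: H; rewrite !big_split /= sum1_size size_iota.
rewrite big_seq [X in _ <= X]big_seq; apply: leq_sum => d; rewrite mem_iota => Hd; rewrite /A /B /C.
case: (ltnP d p) => Hdp; last by rewrite !mul0n; case: (p + (t.+1 - d) <= m.+1); case: (cl k f p (p + (t.+1 - d))).
have -> : p - d + t.+1 = p + (t.+1 - d) by lia.
have Hc : (p + (t.+1 - d) <= m.+1) -> cl k f (p - d) p -> cl k f p (p + (t.+1 - d)) ->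
          cl k f (p - d) (p + (t.+1 - d)).
  move=> HB; rewrite /cl [Ek k (f p) _]Ek_sym; apply: cl_trans; apply: Hmax; lia.
move: Hc.
case: (cl k f (p - d) p); case: (cl k f p (p + (t.+1 - d)));
  case: (cl k f (p - d) (p + (t.+1 - d))); case: (p + (t.+1 - d) <= m.+1); rewrite /=; lia.
Qed.

Lemma dec_f : Ct k t m.+1 f + Gf = Ct k t m f' + (Lf + Rf).
Proof. by rewrite addnA; apply: decomp. Qed.

Lemma dec_g : Ct k t m.+1 g = Ct k t m g + minn t K.
Proof.
have [HM' Hg] := Mu_restrict _ _ _ _ HM Hp Hmax.
have Hm1 : 1 <= m.+1 <= m.+1 by lia.
have := decomp k g t m (m.+1) Hm1.
have -> : \sum_(X <- iota 1 m.+1) \sum_(Y <- iota 1 m.+1)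
     ((X < m.+1) * (m.+1 < Y) * (Y - X == t.+1) * cl k g X Y) = 0.
  rewrite big1_seq // => X; rewrite mem_iota => HX; rewrite big1_seq // => Y; rewrite mem_iota => HY.
  by (have -> : (m.+1 < Y) = false by lia); rewrite muln0 mul0n.
have -> : \sum_(Y <- iota 1 m.+1) ((m.+1 < Y) * (Y - m.+1 <= t) * cl k g m.+1 Y) = 0.
  by rewrite big1_seq // => Y; rewrite mem_iota => HY; have -> : (m.+1 < Y) = false by lia.
rewrite !addn0 => ->.
congr (_ + _).
  by apply: Ct_ext => x Hx; rewrite /phi; have -> : x < m.+1 by lia.
rewrite winL // -sum_le_iota.
apply: eq_big_seq => d; rewrite mem_iota => Hd.
case: (ltnP d m.+1) => Hdm /=; last by rewrite /K; lia.
have Hx : 1 <= m.+1 - d <= m by lia.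
rewrite mul1n /cl Hg Ek_le; last first.
  rewrite (Mu_le _ _ _ _ _ HM' Hx) /M (cnt_all _ _ _ _ Hp Hmax) //; lia.
rewrite (Mu_le _ _ _ _ _ HM' Hx) /K.
have := cnt_size m f' (M - (k.+1)%:Z)%R.
rewrite /f' /M; lia.
Qed.

End Step.

Lemma step k t m f g : is_Mu m.+1 f g -> exists f' G LR K,
  [/\ is_Mu m f' g, Ct k t m.+1 f + G = Ct k t m f' + LR,
      Ct k t m.+1 g = Ct k t m g + minn t K,
      LR <= K /\ LR <= t + G &
      (m.+1 <= t -> G = 0 /\ LR = K)].
Proof.
move=> HM; have [p [Hp Hmax]] := max_exists f m.
have [HM' Hg] := Mu_restrict _ _ _ _ HM Hp Hmax.
eexists; eexists; eexists; eexists; split.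
- exact: HM'.
- exact: (dec_f k t m f p Hp).
- exact: (dec_g k t m f g p HM Hp Hmax).
- split; [exact: (LR_le_K k t m f p Hp Hmax) | exact: (LR_le_tG k t m f p Hp Hmax)].
- move=> Ht; split; [exact: (G0 k t m f p Ht) || exact: (G0 k t m f p Hp Ht) || exact: (G0 k t m f Ht) | exact: (LR_eq_K k t m f p Hp Hmax Ht)].
Qed.

Lemma mainA k t n f g : is_Mu n f g -> Ct k t n f <= Ct k t n g.
Proof.
elim: n f g => [|m IH] f g HM; first by rewrite /Ct big_nil.
have [f' [G [LR [K [HM' E1 E2 [H1 H2] _]]]]] := step k t m f g HM.
have := IH _ _ HM'; lia.
Qed.

Lemma mainT k t n f g : n <= t -> is_Mu n f g -> Ct k t n f = Ct k t n g.
Proof.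
elim: n f g => [|m IH] f g Ht HM; first by rewrite /Ct !big_nil.
have [f' [G [LR [K [HM' E1 E2 [H1 H2] H3]]]]] := step k t m f g HM.
have [HG HL] := H3 Ht.
have := IH _ _ (ltnW Ht) HM'; lia.
Qed.


Section Final.
Variables (R : realType) (n k : nat) (h : nat -> R).

Lemma h_decomp d : 1 <= d <= n.-1 ->
  h d = (h n.-1 + \sum_(0 <= t < n.-1) (h t - h t.+1) * (d <= t)%:R)%R.
Proof.
move=> Hd.
rewrite (big_cat_nat (n := d)) //=; last lia.
rewrite big1_seq; last first.
  move=> t; rewrite mem_index_iota => /andP [_ Ht].
  by (have -> : (d <= t) = false by lia); rewrite mulr0.
rewrite add0r.
rewrite (telescope_sumr_eq (fun t => - h t)%R); [by rewrite opprK; ring | lia |].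
move=> t Ht.
have -> : d <= t by lia.
by rewrite mulr1 opprK addrC.
Qed.

Definition Cw (v : nat -> int) : R :=
  (\sum_(x <- iota 1 n) \sum_(y <- iota 1 n) ((x < y) * cl k v x y)%:R * h (y - x))%R.

Lemma mul_natr_sum2 (c : R) (a : nat -> nat -> nat) s :
  (c * (\sum_(x <- s) \sum_(y <- s) a x y)%:R = \sum_(x <- s) \sum_(y <- s) c * (a x y)%:R)%R.
Proof.
rewrite GRing.natr_sum mulr_sumr; apply: eq_bigr => x _.
by rewrite GRing.natr_sum mulr_sumr.
Qed.

Lemma Cw_eq v : Cw v = (h n.-1 * (Ct k n n v)%:R +
  \sum_(0 <= t < n.-1) (h t - h t.+1) * (Ct k t n v)%:R)%R.
Proof.
rewrite /Ct mul_natr_sum2.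
under [X in _ = (_ + X)%R]eq_bigr => t _ do rewrite mul_natr_sum2.
rewrite [X in _ = (_ + X)%R]exchange_big /=.
under [X in _ = (_ + X)%R]eq_bigr => x _ do rewrite exchange_big /=.
rewrite /Cw -big_split /=; apply: eq_big_seq => x; rewrite mem_iota => Hx.
rewrite -big_split /=; apply: eq_big_seq => y; rewrite mem_iota => Hy.
case: (ltnP x y) => Hxy; last first.
  rewrite /= !mul0n mul0r mulr0 add0r big1 // => t _; by rewrite /= ?mul0n ?mulr0.
have -> : (y - x <= n) by lia.
case: (cl k v x y); last first.
  rewrite /= !muln0 mul0r mulr0 add0r big1 // => t _; by rewrite /= ?muln0 ?mulr0.
rewrite /= !mul1n mul1r mulr1 (h_decomp (y - x)); last lia.
congr (_ + _)%R; apply: eq_bigr => t _; by rewrite mul1n muln1.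
Qed.
Lemma Ek_refl (a : int) : Ek k a a = false.
Proof. by rewrite /Ek subrr normr0. Qed.

Lemma Hfun_expand v : Hfun n h (Ek k) v =
  (\sum_(x <- iota 1 n) \sum_(y <- iota 1 n) (x < y)%:R * h (y - x) - Cw v)%R.
Proof.
rewrite /Hfun /J big_filter big_mkcond big_allpairs /Cw -sumrB; apply: eq_bigr => x _.
rewrite -sumrB; apply: eq_bigr => y _ /=.
case: (ltngtP x y) => Hxy /=.
- rewrite /cl; case: (Ek k (v x) (v y)) => /=.
    by rewrite mul0r subr0 mul1r.
  by rewrite mul1r subrr.
- by rewrite !mul0r subrr.
- by subst y; rewrite Ek_refl /= !mul0r subrr.
Qed.
End Final.

Local Open Scope ring_scope.

Theorem theorem2p2 (R : realType) (n k : nat) (h : nat -> R)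
  (u Mu : nat -> int) :
  (0 < n)%N -> (0 < k)%N ->
  (forall a b : nat, (a <= b)%N -> (b <= n - 1)%N -> h b <= h a) ->
  is_Mu n u Mu ->
  Hfun n h (Ek k) Mu <= Hfun n h (Ek k) u.
Proof.
move=> Hn Hk Hh HM.
rewrite !Hfun_expand lerD2l lerN2 !Cw_eq (mainT k n n u Mu (leqnn n) HM) lerD2l.
apply: ler_sum_nat => t Ht; apply: ler_wpM2l.
  rewrite subr_ge0; apply: Hh; lia.
rewrite ler_nat; exact: mainA.
Qed.
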